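(* Let $k\ge1$, $\tau\in(0,1)$, $f(s)=s-\frac{s}{\tau}+\frac{\mathbb{E}[\min\{\mathrm{Pois}(sk),k\}]}{\tau k}$, $\alpha_k^\tau=\sup_{0\le s\le1}f(s)$, $\beta_k^\tau=\sup_{s\ge0}f(s)$, and let $s^*_\alpha,s^*_\beta$ be the respective maximizers. Then $s^*_\alpha=s^*_\beta$ (and hence $\alpha_k^\tau=\beta_k^\tau$) if and only if $$\tau\le1-e^{-k}\sum_{j=0}^{k-1}\frac{k^j}{j!}.$$ In particular, this condition holds for every $k\ge1$ whenever $\tau\le1/2$.
   Context: $\mathrm{Pois}(\lambda)$ denotes a Poisson random variable with mean $\lambda$. The function $f$ is concave on $[0,\infty)$, so the maximizers are well defined. *)

(* Defs.v *)
From Stdlib Require Import Reals Lra.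
From Coquelicot Require Import Coquelicot.
Open Scope R_scope.

Definition pois_pmf (lam : R) (j : nat) : R :=
  exp (- lam) * lam ^ j / INR (Factorial.fact j).

Definition E_min_pois (lam : R) (k : nat) : R :=
  Series (fun j => INR (Nat.min j k) * pois_pmf lam j).

Definition f_obj (k : nat) (tau s : R) : R :=
  s - s / tau + E_min_pois (s * INR k) k / (tau * INR k).

Definition is_maximizer (P : R -> Prop) (g : R -> R) (x : R) : Prop :=
  P x /\ forall y, P y -> g y <= g x.

(* 1 - e^{-k} sum_{j=0}^{k-1} k^j / j!   (requires k >= 1) *)
Definition threshold (k : nat) : R :=
  1 - exp (- INR k) * sum_f_R0 (fun j => INR k ^ j / INR (Factorial.fact j)) (k - 1).

(* Main.v *)
Require Import Defs.
From Stdlib Require Import Reals.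
From Coquelicot Require Import Coquelicot.
From Stdlib Require Import Reals Lra Lia.
Open Scope R_scope.
Notation fact := Factorial.fact.

Definition Sx (n : nat) (x : R) : R := sum_f_R0 (fun j => x ^ j / INR (fact j)) n.
Definition Tx (n : nat) (x : R) : R := sum_f_R0 (fun m => Sx m x) n.

Lemma fact_pos_R n : 0 < INR (fact n).
Proof. apply INR_fact_lt_0. Qed.

Lemma dpl_eq (f : R -> R) (x l l' : R) : derivable_pt_lim f x l -> l = l' -> derivable_pt_lim f x l'.
Proof. intros H ->; exact H. Qed.

Lemma dpl_ext (f g : R -> R) (x l : R) : (forall y, f y = g y) -> derivable_pt_lim f x l -> derivable_pt_lim g x l.
Proof. intros H. apply derivable_pt_lim_ext. auto. Qed.

Lemma dpl_plus (f g : R -> R) x a b : derivable_pt_lim f x a -> derivable_pt_lim g x b ->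
  derivable_pt_lim (fun y => f y + g y) x (a + b).
Proof. intros. apply derivable_pt_lim_plus; auto. Qed.
Lemma dpl_mult (f g : R -> R) x a b : derivable_pt_lim f x a -> derivable_pt_lim g x b ->
  derivable_pt_lim (fun y => f y * g y) x (a * g x + f x * b).
Proof. intros. eapply dpl_eq. apply derivable_pt_lim_mult; eauto. lra. Qed.

Lemma Sx_deriv n x : derivable_pt_lim (Sx n) x (Sx n x - x ^ n / INR (fact n)).
Proof.
  induction n.
  - unfold Sx; simpl. apply is_derive_Reals. apply is_derive_ext with (fun _ => 1 / 1).
    { intros; simpl; field. }
    auto_derive; auto; field.
  - apply dpl_ext with (fun x => Sx n x + x ^ (S n) / INR (fact (S n))).
    { intros; unfold Sx; simpl; reflexivity. }
    eapply dpl_eq. apply dpl_plus. apply IHn.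
    apply is_derive_Reals. auto_derive. auto.
    reflexivity. unfold Sx; simpl sum_f_R0. change (fact n + n * fact n)%nat with (fact (S n)).
    pose proof (fact_pos_R n).
    change (match n with | 0%nat => 1 | S _ => INR n + 1 end) with (INR (S n)).
    rewrite fact_simpl, mult_INR. rewrite S_INR. simpl pow.
    pose proof (pos_INR n). field. split; lra.
Qed.

Lemma Tx_deriv n x : derivable_pt_lim (Tx n) x (Tx n x - Sx n x).
Proof.
  induction n.
  - apply dpl_ext with (Sx 0). { intros; reflexivity. }
    eapply dpl_eq. apply Sx_deriv. unfold Tx, Sx; simpl; field.
  - apply dpl_ext with (fun x => Tx n x + Sx (S n) x).
    { intros; unfold Tx; simpl; reflexivity. }
    eapply dpl_eq. apply dpl_plus. apply IHn. apply Sx_deriv.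
    unfold Tx at 2; simpl sum_f_R0; fold (Tx n x).
    unfold Tx, Sx; simpl sum_f_R0. simpl pow. change (fact (S n)) with (fact n + n * fact n)%nat. ring.
Qed.

Lemma dpl_expn x : derivable_pt_lim (fun y => exp (- y)) x (- exp (- x)).
Proof. apply is_derive_Reals. auto_derive; auto. ring. Qed.

Definition Fc n x := exp (- x) * Sx n x.
Definition Gm n x := INR (S n) - exp (- x) * Tx n x.

Lemma Fc_deriv n x : derivable_pt_lim (Fc n) x (- (exp (- x) * x ^ n / INR (fact n))).
Proof.
  eapply dpl_eq. apply (dpl_mult (fun y => exp (- y)) (Sx n)). apply dpl_expn. apply Sx_deriv.
  field. apply Rgt_not_eq, fact_pos_R.
Qed.

Lemma Gm_deriv n x : derivable_pt_lim (Gm n) x (Fc n x).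
Proof.
  apply dpl_ext with (fun y => INR (S n) + (- 1) * (exp (- y) * Tx n y)).
  { intros; unfold Gm; ring. }
  eapply dpl_eq. apply dpl_plus. apply derivable_pt_lim_const.
  apply (dpl_mult (fun _ => -1)). apply derivable_pt_lim_const.
  apply (dpl_mult (fun y => exp (- y)) (Tx n)). apply dpl_expn. apply Tx_deriv.
  cbv beta. unfold Fc; ring.
Qed.

Lemma finite_series (a : nat -> R) N : (forall j, (N < j)%nat -> a j = 0) -> is_series a (sum_f_R0 a N).
Proof.
  intros H. apply is_series_Reals. intros eps Heps. exists N. intros m Hm.
  assert (E : forall d, sum_f_R0 a (N + d) = sum_f_R0 a N).
  { induction d. rewrite Nat.add_0_r; auto. rewrite Nat.add_succ_r. simpl. rewrite IHd, H by lia. ring. }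
  replace m with (N + (m - N))%nat by lia. rewrite E. unfold R_dist. rewrite Rminus_diag, Rabs_R0. lra.
Qed.

Lemma pmf_series (l : R) : is_series (pois_pmf l) 1.
Proof.
  pose proof (is_exp_Reals l) as H. unfold is_pseries in H.
  apply (is_series_scal (K := R_AbsRing) (exp (- l))) in H.
  replace 1 with (scal (exp (- l)) (exp l)).
  2:{ change (exp (-l) * exp l = 1). rewrite <- exp_plus. replace (-l + l) with 0 by ring. apply exp_0. }
  eapply is_series_ext. 2: exact H. intros n. unfold pois_pmf.
  rewrite <- pow_n_pow. change (exp (- l) * (pow_n l n * / INR (fact n)) = exp (- l) * pow_n l n / INR (fact n)).
  unfold Rdiv; ring.
Qed.

Lemma weighted_sum (a : nat -> R) n :
  sum_f_R0 (fun j => (INR (S n) - INR j) * a j) n = sum_f_R0 (fun m => sum_f_R0 a m) n.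
Proof.
  induction n.
  - simpl. ring.
  - rewrite !tech5. rewrite <- IHn.
    rewrite (sum_eq (fun j => (INR (S (S n)) - INR j) * a j) (fun j => (INR (S n) - INR j) * a j + a j)).
    2:{ intros i _. rewrite (S_INR (S n)). ring. }
    rewrite plus_sum. rewrite (S_INR (S n)). ring.
Qed.

Lemma Emin_closed l n : E_min_pois l (S n) = Gm n l.
Proof.
  unfold E_min_pois. apply is_series_unique.
  set (u := fun j => (INR (S n) - INR (Nat.min j (S n))) * pois_pmf l j).
  assert (Hu : is_series u (sum_f_R0 u n)).
  { apply finite_series. intros j Hj. unfold u. rewrite Nat.min_r by lia. ring. }
  assert (Hk := is_series_scal (K := R_AbsRing) (INR (S n)) _ _ (pmf_series l)).
  assert (H := is_series_minus _ _ _ _ Hk Hu).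
  replace (Gm n l) with (plus (scal (INR (S n)) 1) (opp (sum_f_R0 u n))).
  - eapply is_series_ext. 2: exact H. intros j. unfold u.
    change (INR (S n) * pois_pmf l j + - ((INR (S n) - INR (Nat.min j (S n))) * pois_pmf l j)
       = INR (Nat.min j (S n)) * pois_pmf l j). ring.
  - change (INR (S n) * 1 + - sum_f_R0 u n = Gm n l). unfold Gm.
    rewrite (sum_eq u (fun j => (INR (S n) - INR j) * (l ^ j / INR (fact j)) * exp (- l))).
    2:{ intros i Hi. unfold u, pois_pmf. rewrite Nat.min_l by lia. unfold Rdiv; ring. }
    rewrite <- scal_sum.
    rewrite weighted_sum. unfold Tx, Sx. ring.
Qed.

Lemma sum_rev (f : nat -> R) n : sum_f_R0 f n = sum_f_R0 (fun i => f (n - i)%nat) n.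
Proof.
  induction n. reflexivity.
  rewrite (decomp_sum (fun i => f (S n - i)%nat)) by lia. simpl pred.
  rewrite tech5, IHn. rewrite Nat.sub_0_r. simpl Nat.sub. ring.
Qed.

Lemma fact_ineq i : forall a, (fact (a + 2 * i + 1) <= (a + i + 1) ^ (2 * i + 1) * fact a)%nat.
Proof.
  induction i; intros a.
  - replace (a + 2 * 0 + 1)%nat with (S a) by lia. simpl. lia.
  - specialize (IHi (S a)).
    replace (a + 2 * S i + 1)%nat with (S (S a + 2 * i + 1)) by lia.
    replace (a + S i + 1)%nat with (S a + i + 1)%nat by lia.
    replace (2 * S i + 1)%nat with (S (S (2 * i + 1))) by lia.
    change (fact (S (S a + 2 * i + 1))) with (S (S a + 2 * i + 1) * fact (S a + 2 * i + 1))%nat.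
    change (fact (S a)) with (S a * fact a)%nat in IHi.
    set (K := (S a + i + 1)%nat) in *. set (P := (K ^ (2 * i + 1))%nat) in *.
    rewrite !Nat.pow_succ_r'. fold P.
    assert (HK : (S (S a + 2 * i + 1) * S a <= K * K)%nat) by (unfold K; nia).
    set (F := fact (S a + 2 * i + 1)) in *.
    apply Nat.le_trans with (S (S a + 2 * i + 1) * (P * (S a * fact a)))%nat.
    { apply Nat.mul_le_mono_l. exact IHi. }
    replace (S (S a + 2 * i + 1) * (P * (S a * fact a)))%nat with
      ((S (S a + 2 * i + 1) * S a) * (P * fact a))%nat by ring.
    replace (K * (K * P) * fact a)%nat with ((K * K) * (P * fact a))%nat by ring.
    apply Nat.mul_le_mono_r. exact HK.
Qed.

Lemma two_S_le_exp n : 2 * Sx n (INR (S n)) <= exp (INR (S n)).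
Proof.
  set (k := INR (S n)).
  assert (Hk : 0 < k) by (apply lt_0_INR; lia).
  set (a := fun j => k ^ j / INR (fact j)).
  assert (Ha : forall j, 0 <= a j).
  { intros j. unfold a. apply Rmult_le_pos. apply pow_le; lra. left. apply Rinv_0_lt_compat, fact_pos_R. }
  assert (Htail : Sx n k <= sum_f_R0 (fun i => a (S n + i)%nat) n).
  { unfold Sx. fold a. rewrite sum_rev. apply sum_Rle. intros i Hi.
    unfold a. pose proof (fact_ineq i (n - i)) as F.
    replace (n - i + 2 * i + 1)%nat with (S n + i)%nat in F by lia.
    replace (n - i + i + 1)%nat with (S n) in F by lia.
    apply le_INR in F. rewrite mult_INR, pow_INR in F. fold k in F.
    pose proof (fact_pos_R (n - i)). pose proof (fact_pos_R (S n + i)).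
    replace (S n + i)%nat with (n - i + (2 * i + 1))%nat at 1 by lia.
    rewrite pow_add.
    unfold Rdiv. apply Rmult_le_reg_r with (INR (fact (n - i)) * INR (fact (S n + i))).
    nra.
    replace (k ^ (n - i) * / INR (fact (n - i)) * (INR (fact (n - i)) * INR (fact (S n + i))))
      with (k ^ (n - i) * INR (fact (S n + i))) by (field; lra).
    replace (k ^ (n - i) * k ^ (2 * i + 1) * / INR (fact (S n + i)) * (INR (fact (n - i)) * INR (fact (S n + i))))
      with (k ^ (n - i) * (k ^ (2 * i + 1) * INR (fact (n - i)))) by (field; lra).
    apply Rmult_le_compat_l. apply pow_le; lra. exact F. }
  assert (Hsplit : Sx (S (2 * n)) k = Sx n k + sum_f_R0 (fun i => a (S n + i)%nat) n).
  { unfold Sx. rewrite (tech2 _ n (S (2 * n))) by lia. fold a.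
    replace (S (2 * n) - S n)%nat with n by lia. reflexivity. }
  pose proof (exp_ge_taylor k (S (2 * n)) ltac:(lra)). fold (Sx (S (2 * n)) k) in H.
  lra.
Qed.

Lemma Fc_decr n a b : 0 <= a -> a < b -> Fc n b < Fc n a.
Proof.
  intros Ha Hab.
  destruct (MVT_cor2 (Fc n) (fun x => - (exp (- x) * x ^ n / INR (fact n))) a b Hab)
    as [c [Hc Hc2]].
  { intros c _. apply Fc_deriv. }
  assert (0 < exp (- c) * c ^ n / INR (fact n)).
  { unfold Rdiv. apply Rmult_lt_0_compat. apply Rmult_lt_0_compat. apply exp_pos.
    apply pow_lt; lra. apply Rinv_0_lt_compat, fact_pos_R. }
  nra.
Qed.

Definition fpd n tau s := 1 - 1 / tau + Fc n (s * INR (S n)) / tau.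

Lemma f_deriv n tau s : tau <> 0 -> derivable_pt_lim (f_obj (S n) tau) s (fpd n tau s).
Proof.
  intros Ht. set (k := INR (S n)).
  assert (Hk : 0 < k) by (apply lt_0_INR; lia).
  apply dpl_ext with (fun s => s * (1 - 1 / tau) + (1 / (tau * k)) * Gm n (s * k)).
  { intros y. unfold f_obj. rewrite Emin_closed. fold k. field. split; lra. }
  eapply dpl_eq. apply dpl_plus.
  apply (dpl_mult (fun s => s) (fun _ => 1 - 1 / tau)). apply derivable_pt_lim_id. apply derivable_pt_lim_const.
  apply (dpl_mult (fun _ => 1 / (tau * k)) (fun s => Gm n (s * k))). apply derivable_pt_lim_const.
  apply (derivable_pt_lim_comp (fun s => s * k) (Gm n)).
  apply (dpl_mult (fun s => s) (fun _ => k)). apply derivable_pt_lim_id. apply derivable_pt_lim_const.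
  apply Gm_deriv.
  cbv beta. unfold fpd. fold k. field. split; lra.
Qed.

Lemma abstract_max (f fp : R -> R) :
  (forall x, derivable_pt_lim f x (fp x)) ->
  (forall a b, 0 <= a -> a < b -> fp b < fp a) ->
  forall sa sb, is_maximizer (fun s => 0 <= s <= 1) f sa ->
  is_maximizer (fun s => 0 <= s) f sb -> (sa = sb <-> fp 1 <= 0).
Proof.
  intros Hd Hdec sa sb [Ha Ma] [Hb Mb].
  assert (MVT : forall x y, x < y -> exists c, f y - f x = fp c * (y - x) /\ x < c < y).
  { intros x y Hxy. apply MVT_cor2; auto. }
  split.
  - intros <-. destruct (Rle_lt_dec (fp 1) 0) as [|Hpos]; auto. exfalso.
    destruct (Rlt_le_dec sa 1) as [Hlt|Hge].
    + destruct (MVT sa 1 Hlt) as [c [E Hc]].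
      assert (fp 1 < fp c) by (apply Hdec; lra).
      assert (f sa >= f 1) by (apply Rle_ge, Ma; lra). nra.
    + assert (sa = 1) by lra. subst sa.
      destruct (Hd 1 (fp 1) Hpos) as [del Hdel].
      assert (Hh : del / 2 <> 0) by (pose proof (cond_pos del); lra).
      specialize (Hdel (del / 2) Hh).
      assert (Habs : Rabs (del / 2) < del) by (pose proof (cond_pos del); rewrite Rabs_right; lra).
      specialize (Hdel Habs).
      assert (f (1 + del / 2) <= f 1) by (apply Mb; pose proof (cond_pos del); lra).
      assert (Hq : (f (1 + del / 2) - f 1) / (del / 2) <= 0).
      { unfold Rdiv. pose proof (cond_pos del).
        apply Rmult_le_0_r. lra. left. apply Rinv_0_lt_compat. lra. }
      apply Rabs_def2 in Hdel. lra.
  - intros Hneg.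
    assert (Hb1 : sb <= 1).
    { destruct (Rle_lt_dec sb 1) as [|Hgt]; auto. exfalso.
      destruct (MVT 1 sb Hgt) as [c [E Hc]].
      assert (fp c < fp 1) by (apply Hdec; lra).
      assert (f 1 <= f sb) by (apply Mb; lra). nra. }
    assert (Heq : f sa = f sb).
    { apply Rle_antisym. apply Mb; lra. apply Ma; lra. }
    assert (Huniq : forall x y, 0 <= x -> x < y -> f x = f sb -> f y = f sb -> False).
    { intros x y Hx Hxy Fx Fy.
      destruct (MVT x y Hxy) as [c [E Hc]].
      assert (fp c = 0).
      { assert (fp c * (y - x) = 0) by lra.
        apply Rmult_integral in H. destruct H; auto. lra. }
      destruct (MVT x c (proj1 Hc)) as [d [E2 Hd2]].
      assert (fp c < fp d) by (apply Hdec; lra).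
      assert (f c <= f sb) by (apply Mb; lra). nra. }
    destruct (Rtotal_order sa sb) as [Hl|[He|Hg]]; auto; exfalso.
    + apply (Huniq sa sb); lra.
    + apply (Huniq sb sa); lra.
Qed.

Theorem proposition6p2 :
  forall (k : nat) (tau : R),
    (1 <= k)%nat -> 0 < tau < 1 ->
    (forall s_alpha s_beta : R,
        is_maximizer (fun s => 0 <= s <= 1) (f_obj k tau) s_alpha ->
        is_maximizer (fun s => 0 <= s) (f_obj k tau) s_beta ->
        (s_alpha = s_beta <-> tau <= threshold k))
    /\ (tau <= 1 / 2 -> tau <= threshold k).
Proof.
  intros k tau Hk Ht. destruct k as [|n]; [lia|].
  assert (Hth : threshold (S n) = 1 - Fc n (INR (S n))).
  { unfold threshold, Fc, Sx. simpl (S n - 1)%nat. rewrite Nat.sub_0_r. reflexivity. }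
  split.
  - intros sa sb Ha Hb.
    rewrite (abstract_max (f_obj (S n) tau) (fpd n tau)); auto.
    + rewrite Hth. unfold fpd. rewrite Rmult_1_l.
      split; intros H.
      * assert (Hm : (1 - 1 / tau + Fc n (INR (S n)) / tau) * tau <= 0) by nra.
        replace ((1 - 1 / tau + Fc n (INR (S n)) / tau) * tau) with (tau - 1 + Fc n (INR (S n))) in Hm
          by (field; lra). lra.
      * replace (1 - 1 / tau + Fc n (INR (S n)) / tau) with ((tau - 1 + Fc n (INR (S n))) / tau)
          by (field; lra).
        unfold Rdiv. apply Rmult_le_0_r. lra. left. apply Rinv_0_lt_compat. lra.
    + intros x. apply f_deriv. lra.
    + intros a b Ha0 Hab. unfold fpd.
      assert (Hk1 : 0 < INR (S n)) by (apply lt_0_INR; lia).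
      assert (Fc n (b * INR (S n)) < Fc n (a * INR (S n))) by (apply Fc_decr; nra).
      unfold Rdiv. apply Rplus_lt_compat_l. apply Rmult_lt_compat_r. apply Rinv_0_lt_compat; lra. auto.
  - intros Hh. rewrite Hth. pose proof (two_S_le_exp n).
    unfold Fc. pose proof (exp_pos (INR (S n))).
    assert (exp (- INR (S n)) * exp (INR (S n)) = 1).
    { rewrite <- exp_plus. replace (- INR (S n) + INR (S n)) with 0 by ring. apply exp_0. }
    pose proof (exp_pos (- INR (S n))). nra.
Qed.
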